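(* The only cell-preserving, decoration-preserving automorphism of the decorated combinatorial tiling $K$ is the identity map.
   Context: $K$ is the decorated combinatorial tiling: a 2-dimensional CW-complex homeomorphic to the open disk, built as follows. A decorated pentagon has boundary vertices $v_1,\dots,v_5$ in cyclic order (indices mod 5) with corner labels $1,\dots,5$, corner $v_i$ labelled $i$. The rule $\omega$ adds a vertex $m_i$ inside each edge $v_iv_{i+1}$, interior vertices $c_1,\dots,c_5$, edges $c_ic_{i+1}$, $c_im_i$, and replaces the face by the central pentagon $c_1\cdots c_5$ (label $i+1$ at $c_i$) and petals $v_i\,m_i\,c_i\,c_{i-1}\,m_{i-1}$ with labels $i,i+1,i+2,i+3,i+4$ (mod 5) at these corners. $K_0$ is one decorated pentagon, $K_n=\omega^n(K_0)$, $K_n$ embeds label-preservingly onto the central superpentagon $\omega^n(\text{central face of }\omega(K_0))$ of $K_{n+1}$, and $K$ is the direct limit. Decoration-preserving means corner labels are preserved. *)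

(* Defs.v *)
(* Conventions.
   * A letter [a : option 'I_5] names a subface of omega(P) for a decorated
     pentagon P: [None] is the central pentagon c_1..c_5, [Some i] is the
     petal  v_i m_i c_i c_{i-1} m_{i-1}  (the petal whose corner labelled i
     is the corner v_i of P).
   * A word [a :: w] names the face of omega^(n+1)(P) (n = size w) which is
     the face [w] of omega^n(subface a), the subface carrying its own
     decoration.  Faces of K_n = omega^n(K_0) are the words of length n.
   * The label-preserving embedding K_n -> K_(n+1) onto omega^n(central
     face of omega(K_0)) sends the face w to [None :: w] (corner label j to
     corner label j).  Hence faces of the direct limit K are the words not
     starting with [None] ("reduced" words); the face [w] lives at level
     [size w].
   * Labels of a face are in 'I_5; the corner labelled j of a face is joined
     by an edge to the corner labelled j+1 (cyclic order of the boundary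
     equals the cyclic order of labels, as in the rule omega).
   * Vertices: the position of a corner inside omega^n(P) is described by a
     [loc]:
       Bd i k   : on the side v_i v_(i+1) of P, k steps (k < 2^n) from v_i;
       In a l   : interior vertex of subface a, with position l there;
       Cv i     : the centre vertex c_i of omega(P);
       Ecc i t  : interior point of the (subdivided) edge c_i c_(i+1),
                  t steps from c_i (0 < t < 2^(n-1));
       Ecm i t  : interior point of the (subdivided) edge c_i m_i,
                  t steps from m_i (0 < t < 2^(n-1)).                     *)
From mathcomp Require Import all_boot.

Set Implicit Arguments.
Unset Strict Implicit.
Unset Printing Implicit Defensive.

Definition letter := option 'I_5.

Inductive loc : Type :=
| Bd (i k : nat)
| In (a : letter) (l : loc)
| Cv (i : nat)
| Ecc (i t : nat)
| Ecm (i t : nat).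

Definition lpred (i : nat) : nat := (i + 4) %% 5.

(* [lift N a l]: position in omega^(n+1)(P) of the vertex with position [l]
   in omega^n(subface a), where N = 2^n is the number of edges on each side
   of the subface. *)
Definition lift (N : nat) (a : letter) (l : loc) : loc :=
  match l with
  | Bd i k =>
      match a with
      | None =>
          (* central face: corner labelled j is c_(j-1); side j runs from
             c_(j-1) to c_j *)
          if k == 0 then Cv (lpred i) else Ecc (lpred i) k
      | Some b =>
          (* petal b: corners labelled b..b+4 are v_b m_b c_b c_(b-1) m_(b-1) *)
          match (i + 5 - b) %% 5 with
          | 0 => Bd b k                                          (* v_b -> m_b *)
          | 1 => if k == 0 then Bd b N else Ecm b k              (* m_b -> c_b *)
          | 2 => if k == 0 then Cv b else Ecc (lpred b) (N - k)  (* c_b -> c_(b-1) *)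
          | 3 => if k == 0 then Cv (lpred b)
                 else Ecm (lpred b) (N - k)             (* c_(b-1) -> m_(b-1) *)
          | _ => Bd (lpred b) (N + k)                   (* m_(b-1) -> v_b *)
          end
      end
  | _ => In a l
  end.

Fixpoint loc_of (w : seq letter) (j : 'I_5) : loc :=
  match w with
  | [::] => Bd j 0
  | a :: w' => lift (2 ^ size w') a (loc_of w' j)
  end.

(* Canonical name of a vertex of the direct limit K, given its position [l]
   at level [n] (i.e. in K_n).  Passing from level n to level n+1 replaces
   l by [lift (2^n) None l]; the canonical name is the one at the least
   level at which the vertex is an interior vertex, obtained by pushing
   boundary positions one level up and stripping central [In None] layers. *)
Fixpoint strip (n : nat) (l : loc) : nat * loc :=
  match l with
  | In None l' => strip n.-1 l'
  | _ => (n, l)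
  end.

Definition vcanon (n : nat) (l : loc) : nat * loc :=
  match l with
  | Bd _ _ => (n.+1, lift (2 ^ n) None l)
  | _ => strip n l
  end.

Definition vname (w : seq letter) (j : 'I_5) : nat * loc :=
  vcanon (size w) (loc_of w j).

Definition reduced (w : seq letter) : bool :=
  if w is None :: _ then false else true.

Definition face := {w : seq letter | reduced w}.

Definition vertex := {v : nat * loc | exists (f : face) (j : 'I_5), vname (sval f) j = v}.

Definition corner (f : face) (j : 'I_5) : vertex :=
  exist _ (vname (sval f) j) (ex_intro _ f (ex_intro _ j erefl)).

Definition edge (v w : vertex) : Prop :=
  exists (f : face) (j : 'I_5),
    (corner f j = v /\ corner f (ordS j) = w) \/
    (corner f j = w /\ corner f (ordS j) = v).

(* A cell-preserving, decoration-preserving automorphism of K: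
   bijections on vertices and faces, preserving and reflecting edges
   (edges of K are determined by their endpoints), and mapping the corner
   of f labelled j to the corner of (phiF f) labelled j. *)
Definition dec_automorphism (phiV : vertex -> vertex) (phiF : face -> face) : Prop :=
  [/\ bijective phiV, bijective phiF,
      (forall v w, edge v w <-> edge (phiV v) (phiV w)) &
      (forall f j, corner (phiF f) j = phiV (corner f j))].

(* Main.v *)
Require Import Defs.
From mathcomp Require Import all_boot.
From Stdlib Require Import ProofIrrelevance.
From mathcomp Require Import zify.
Set Implicit Arguments. Unset Strict Implicit. Unset Printing Implicit Defensive.

Definition isBd (l : loc) := if l is Bd _ _ then true else false.

Lemma lift_In N c x a y : Defs.lift N c x = In a y -> c = a /\ x = y.
Proof.
case: x => [i k|b l|i|i t|i t] /=; [|by case=> -> ->..].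
case: c => [b|]; last by case: ifP.
by case: ((i + 5 - b) %% 5) => [|[|[|[|?]]]] //; case: ifP.
Qed.

Lemma lift_nonBd N c x : ~~ isBd x -> Defs.lift N c x = In c x.
Proof. by case: x. Qed.

Lemma lift_Bd_nonIn N i k : isBd (Defs.lift N None (Bd i k)) = false.
Proof. by rewrite /=; case: ifP. Qed.

Fixpoint LWf (w : seq letter) (x : loc) : loc :=
  if w is c :: w' then Defs.lift (2 ^ (size w').+1) c (LWf w' x) else x.

Lemma loc_of_rcons w a j : loc_of (rcons w a) j = LWf w (loc_of [:: a] j).
Proof. by elim: w => //= c w ->; rewrite size_rcons. Qed.

Lemma LWf_nonBd w l : ~~ isBd l -> ~~ isBd (LWf w l).
Proof. by elim: w => //= c w IH H; rewrite lift_nonBd // IH. Qed.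

Lemma prefix u l g k : ~~ isBd l -> size g = (size u).+1 -> loc_of g k = LWf u l ->
  exists a, g = rcons u a /\ loc_of [:: a] k = l.
Proof.
move=> Hl; elim: u g => [|c u IH] [|c' g] //=.
  case: g => //= _ H; by exists c'.
case=> Hs; rewrite (lift_nonBd _ _ (LWf_nonBd u Hl)) => /lift_In [-> H].
by have [a [-> Ha]] := IH g Hs H; exists a.
Qed.

Fixpoint depthN l := if l is In None l' then (depthN l').+1 else 0.
Fixpoint coreN l := if l is In None l' then coreN l' else l.

Lemma strip_eq n l : depthN l <= n -> strip n l = (n - depthN l, coreN l).
Proof.
elim: l n => [i k|a l IH|i|i t|i t] n /=; try by rewrite subn0.
case: a => [a|] /=; first by rewrite subn0.
case: n => //= n H; rewrite IH //.
Qed.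

Lemma depth_lift N c x : depthN (Defs.lift N c x) <= (depthN x).+1.
Proof.
case: x => [i k|b l|i|i t|i t] //=; last (by case: c); try by case: c.
case: c => [b|]; last by case: ifP.
case: ((i + 5 - b) %% 5) => [|[|[|[|?]]]] //; by case: ifP.
Qed.

Lemma depth_loc w j : depthN (loc_of w j) <= size w.
Proof.
elim: w => //= c w IH; apply: leq_trans (depth_lift _ _ _) _; by [].
Qed.

Definition childw (w : seq letter) (a : letter) : seq letter :=
  if (w == [::]) && (a == None) then [::] else rcons w a.

Lemma vcanon_nonBd n l : ~~ isBd l -> vcanon n l = strip n l.
Proof. by case: l. Qed.

Lemma vname_child w a j :
  vname (childw w a) j = vcanon (size w).+1 (LWf w (loc_of [:: a] j)).
Proof.
rewrite /childw; case: w => [|c w]; case: a => [a|] //=.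
- by rewrite /vname /= size_rcons loc_of_rcons.
- by rewrite /vname /= size_rcons loc_of_rcons.
Qed.

Lemma LWf_nseq d w l : ~~ isBd l ->
  LWf (nseq d None ++ w) l = iter d (In None) (LWf w l).
Proof.
move=> Hl; elim: d => //= d ->; rewrite lift_nonBd //.
by case: d => [|d] //=; apply: LWf_nonBd.
Qed.

Lemma iter_core l : l = iter (depthN l) (In None) (coreN l).
Proof.
elim: l => //= a l IH; case: a => //= ; by rewrite {1}IH.
Qed.

Lemma star w a j g k i : reduced w -> reduced g -> loc_of [:: a] j = Cv i ->
  vname g k = vname (childw w a) j -> exists b, g = childw w b /\ loc_of [:: b] k = Cv i.
Proof.
move=> Rw Rg Ha; rewrite vname_child Ha.
have Hc : ~~ isBd (Cv i) by [].
have D0 : depthN (LWf w (Cv i)) = 0.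
  case: w Rw => [|[c|] w] //= _; by rewrite lift_nonBd // LWf_nonBd.
rewrite vcanon_nonBd ?LWf_nonBd // strip_eq ?D0 // subn0.
have -> : coreN (LWf w (Cv i)) = LWf w (Cv i).
  by move: D0; case: (LWf w (Cv i)) => // -[].
rewrite /vname.
case HB: (isBd (loc_of g k)).
  case E: (loc_of g k) HB => [i0 p|c l|i1|i1 t|i1 t] // _.
  rewrite /=; case=> Hs.
  case: w Rw Hs D0 => [|c w] Rw Hs D0 /=; last first.
    by rewrite lift_nonBd ?LWf_nonBd //; case: ifP.
  case: g Rg Hs E => // _ _ /= [<- <-] [<-].
  by exists None.
have HN : ~~ isBd (loc_of g k) by rewrite HB.
rewrite vcanon_nonBd // strip_eq ?depth_loc //; case=> Hs Hco.
have Hl := iter_core (loc_of g k); rewrite Hco -LWf_nseq // in Hl.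
have Hs2 : size g = (size (nseq (depthN (loc_of g k)) None ++ w)).+1
   by rewrite size_cat size_nseq -addnS -Hs subnKC // depth_loc.
have [b [Hg Hb]] := prefix Hc Hs2 Hl.
move: Hg Rg; case: (depthN _) => [|d] /= -> Rg; last by [].
exists b; split => //; rewrite /childw; case: w Rg {Rw Hs Hco Hl Hs2 D0} => [|c' w] //=.
by case: b {Hb}.
Qed.

Fixpoint rho (l : loc) : loc := match l with
 | Bd i k => Bd i k.*2 | In a l => In a (rho l) | Cv i => Cv i
 | Ecc i t => Ecc i t.*2 | Ecm i t => Ecm i t.*2 end.

Definition rho' (v : nat * loc) := (v.1.+1, rho v.2).

Lemma rho_inj : injective rho.
Proof.
move=> x; elim: x => [i k|a l IH|i|i t|i t] [i' k'|a' l'|i'|i' t'|i' t'] //=;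
 first [by case=> -> /double_inj -> | by case=> -> /IH -> | by case=> -> ].
Qed.

Lemma rho'_inj : injective rho'.
Proof. by case=> [n l] [n' l'] [-> /rho_inj ->]. Qed.

Lemma rho_lift N c l : rho (Defs.lift N c l) = Defs.lift N.*2 c (rho l).
Proof.
case: l => [i k|a l|i|i t|i t] //=.
case: c => [b|] /=; last by rewrite double_eq0; case: ifP.
case: ((i + 5 - b) %% 5) => [|[|[|[|?]]]] //=; rewrite ?double_eq0;
  try case: ifP => //= _; by rewrite ?doubleB ?doubleD.
Qed.

Lemma loc_of_rcons_S w j : loc_of (rcons w (Some j)) j = rho (loc_of w j).
Proof.
elim: w => [|c w IH] /=.
  by rewrite addKn modnn.
by rewrite IH rho_lift size_rcons expnS mul2n.
Qed.

Lemma depth_rho l : depthN (rho l) = depthN l.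
Proof. by elim: l => [i k|a l IH|i|i t|i t] //=; case: a => //= ; rewrite IH. Qed.

Lemma core_rho l : coreN (rho l) = rho (coreN l).
Proof. by elim: l => [i k|a l IH|i|i t|i t] //=; case: a. Qed.

Lemma vcanon_rho n l : depthN l <= n -> vcanon n.+1 (rho l) = rho' (vcanon n l).
Proof.
case: l => [i k|a l|i|i t|i t] H; [|try (rewrite !vcanon_nonBd // !strip_eq ?depth_rho //;
  by rewrite /rho' /= core_rho subSn)..].
  rewrite /vcanon /rho' /= double_eq0; by case: ifP.
rewrite vcanon_nonBd // [vcanon n _]vcanon_nonBd // !strip_eq ?depth_rho ?(leqW H) //.
by rewrite core_rho /rho' subSn.
Qed.

Lemma vname_S w j : vname (rcons w (Some j)) j = rho' (vname w j).
Proof.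
by rewrite /vname size_rcons loc_of_rcons_S vcanon_rho // depth_loc.
Qed.
Definition sh (j : 'I_5) (d : nat) : 'I_5 := Ordinal (ltn_pmod (j + d) (isT : 0 < 5)).

Ltac en5 x := case: x => [[|[|[|[|[|?]]]]] ?] //.

Lemma F1 (j : 'I_5) : loc_of [:: None] j = Cv (lpred j).
Proof. by []. Qed.

Lemma F2 (j : 'I_5) : loc_of [:: Some j] (sh j 3) = Cv (lpred j).
Proof. by en5 j. Qed.

Lemma F3 (b : 'I_5) : loc_of [:: Some b] (sh b 2) = Cv b.
Proof. by en5 b. Qed.

Lemma F4 (b : 'I_5) a : loc_of [:: a] (sh (sh b 2) 3) = Cv b -> False.
Proof. case: a => [a|]; en5 b; try en5 a; move=> H; vm_compute in H; discriminate. Qed.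

Lemma F5 (b : 'I_5) a : loc_of [:: a] (sh b 3) = Cv (lpred b) -> a = Some b.
Proof. case: a => [a|]; en5 b; try en5 a; move=> H; vm_compute in H; try discriminate;
  by apply/eqP. Qed.

Lemma face_eq (f g : face) : sval f = sval g -> f = g.
Proof. case: f g => [w p] [u q] /= e; subst u; by rewrite (bool_irrelevance p q). Qed.

Lemma reduced_childw w a : reduced w -> reduced (childw w a).
Proof. rewrite /childw; case: w => [|[b|] w] //=; by case: a. Qed.

Definition child (f : face) (a : letter) : face :=
  exist (fun w => reduced w) (childw (sval f) a) (reduced_childw a (proj2_sig f)).

Definition parentw (w : seq letter) := take (size w).-1 w.

Lemma reduced_parent w : reduced w -> reduced (parentw w).
Proof. by case: w => [|[b|] [|c w]] //=. Qed.

Definition parent (f : face) : face := exist (fun w => reduced w) (parentw (sval f)) (reduced_parent (proj2_sig f)).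

Lemma parentw_rcons w a : parentw (rcons w a) = w.
Proof. by rewrite /parentw size_rcons /= -cats1 take_size_cat. Qed.

Lemma parent_child f a : parent (child f a) = f.
Proof.
apply: face_eq; rewrite /= /childw.
case: ifP => [/andP [/eqP -> _] | _]; last exact: parentw_rcons.
by [].
Qed.

Lemma child_parent f : f = child (parent f) (last None (sval f)).
Proof.
apply: face_eq; case: f => w /=; case/lastP: w => [|w a] // R.
rewrite parentw_rcons last_rcons /childw; case: ifP => // /andP [/eqP E /eqP E'].
by move: R; rewrite E E'.
Qed.

Definition Good (phi : face -> face) := forall f j g k,
  vname (sval f) j = vname (sval g) k -> vname (sval (phi f)) j = vname (sval (phi g)) k.

Lemma exist_V (f : face) a b j k : loc_of [:: a] j = loc_of [:: b] k ->
  vname (sval (child f a)) j = vname (sval (child f b)) k.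
Proof. by move=> E; rewrite !vname_child E. Qed.

Lemma star_V (f g : face) a j k i : loc_of [:: a] j = Cv i ->
  vname (sval g) k = vname (sval (child f a)) j ->
  exists b, g = child f b /\ loc_of [:: b] k = Cv i.
Proof.
move=> Ha H; have [b [E Hb]] := star (proj2_sig f) (proj2_sig g) Ha H.
by exists b; split => //; apply: face_eq.
Qed.

Definition Q (f : face) := forall j : 'I_5, exists g : face,
  vname (sval f) j = vname (sval g) (sh j 3).

Lemma Qcent f : Q (child f None).
Proof. move=> j; exists (child f (Some j)); apply: exist_V; by rewrite F1 F2. Qed.

Lemma notQ f b : ~ Q (child f (Some b)).
Proof.
move=> /(_ (sh b 2)) [g H]; have [b' [_ Hb]] := star_V (F3 b) (esym H).
exact: F4 Hb.
Qed.

Definition psiOf (phi : face -> face) (f : face) := parent (phi (child f None)).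

Lemma cent phi : Good phi -> forall f, phi (child f None) = child (psiOf phi f) None.
Proof.
move=> G f; rewrite /psiOf; set X := phi _.
have QX : Q X by move=> j; have [g Hg] := Qcent f j; exists (phi g); exact: G.
have E := child_parent X; case L: (last None (sval X)) E => [b|] E //.
by rewrite E in QX; case: (notQ QX).
Qed.

Lemma pet phi : Good phi -> forall f b, phi (child f (Some b)) = child (psiOf phi f) (Some b).
Proof.
move=> G f b.
have H : vname (sval (child f None)) b = vname (sval (child f (Some b))) (sh b 3)
  by apply: exist_V; rewrite F1 F2.
have := G _ _ _ _ H; rewrite cent // => H2.
have [b' [E Hb']] := star_V (F1 b) (esym H2).
by rewrite E (F5 Hb').
Qed.

Lemma childS (f : face) b : sval (child f (Some b)) = rcons (sval f) (Some b).
Proof. by rewrite /= /childw andbF. Qed.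

Lemma psiGood phi : Good phi -> Good (psiOf phi).
Proof.
move=> G w j u k H.
have H1 : vname (sval (child w (Some j))) j = vname (sval (child u (Some k))) k
  by rewrite !childS !vname_S H.
have := G _ _ _ _ H1; rewrite !pet // !childS !vname_S; exact: rho'_inj.
Qed.

Definition childs (f : face) (s : seq letter) := foldl child f s.

Lemma iter_step n : forall phi, Good phi -> exists psi, Good psi /\
  forall f s, size s = n -> phi (childs f s) = childs (psi f) s.
Proof.
elim: n => [|n IH] phi G.
  by exists phi; split => // f [].
have [psi [Gp Hp]] := IH phi G.
exists (psiOf psi); split; first exact: psiGood.
move=> f [|a s] //= [Hs]; rewrite Hp //.
have -> : psi (child f a) = child (psiOf psi f) a
  by case: a => [b|]; [apply: pet | apply: cent].
by [].
Qed.

Definition root : face := exist (fun w => reduced w) [::] isT.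

Lemma childs_nonempty (x : face) s : sval x != [::] -> sval (childs x s) = sval x ++ s.
Proof.
elim: s x => [|a s IH] x H /=; first by rewrite cats0.
have E : sval (child x a) = rcons (sval x) a by rewrite /= /childw (negbTE H).
by rewrite IH E ?cat_rcons // -size_eq0 size_rcons.
Qed.

Lemma childs_None m : childs root (nseq m None) = root.
Proof.
elim: m => //= m IH.
have -> : child root None = root by apply: face_eq.
exact: IH.
Qed.

Lemma childs_root (f : face) : childs root (sval f) = f.
Proof.
apply: face_eq; case: f => [[|[b|] t] R] //=.
by rewrite childs_nonempty.
Qed.

Lemma good_id phi : Good phi -> forall f, phi f = f.
Proof.
move=> G f.
set n := size (sval (phi root)) + size (sval f).
have [psi [Gp Hp]] := iter_step n G.
have Hr : psi root = root.
  have := Hp root (nseq n None) (size_nseq _ _).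
  rewrite childs_None => Er.
  apply: face_eq; case E: (sval (psi root)) => [|c t] //.
  have := congr1 (fun x => size (sval x)) Er.
  rewrite /= childs_nonempty ?E // size_cat size_nseq /n /= => Hs.
  by move: Hs; lia.
have Hf : f = childs root (nseq (n - size (sval f)) None ++ sval f).
  by rewrite /childs foldl_cat -/(childs root (nseq _ None)) childs_None -/(childs root (sval f)) childs_root.
by rewrite Hf Hp ?Hr // size_cat size_nseq subnK // leq_addl.
Qed.

Theorem mainTheorem5 (phiV : vertex -> vertex) (phiF : face -> face) :
  dec_automorphism phiV phiF ->
  (forall v, phiV v = v) /\ (forall f, phiF f = f).
Proof.
case=> _ _ _ Hc.
have G : Good phiF.
  move=> f j g k H.
  have E : corner f j = corner g k by apply: subset_eq_compat.
  have := congr1 (@proj1_sig _ _) (Hc f j); have := congr1 (@proj1_sig _ _) (Hc g k).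
  by rewrite /= -E => -> ->.
have Hf := good_id G; split => //.
case=> x Hx; have [f [j e]] := Hx.
have -> : exist _ x Hx = corner f j by apply: subset_eq_compat; rewrite -e.
by rewrite -Hc Hf.
Qed.
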